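(* Let $\mathcal{X}$ be an input space, $\mathcal{Y}$ a label set, $\mathcal{D}$ a distribution on $\mathcal{X}\times\mathcal{Y}$ with marginal $\mathcal{P}_{\mathcal{X}}$ on $\mathcal{X}$, and $(x,y)\sim\mathcal{D}$ with $y$ the ground-truth label. Let $\mathcal{F},\mathcal{G}:\mathcal{X}\to\mathcal{Y}$ be classifiers, $\rho,\epsilon\in(0,1)$ constants, and $\mathcal{A}:\mathcal{X}\to\mathcal{X}$ an attack strategy. Suppose $\mathcal{A}$ is $\rho$-conservative and $\mathcal{F},\mathcal{G}$ have risk at most $\epsilon$, i.e. $\Pr(\mathcal{F}(x)\neq y)\le\epsilon$ and $\Pr(\mathcal{G}(x)\neq y)\le\epsilon$. Then $\Pr(\mathcal{F}(\mathcal{A}(x))\neq\mathcal{G}(\mathcal{A}(x)))\le 2\epsilon+\rho$ for $x\sim\mathcal{P}_{\mathcal{X}}$.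
   Context: Let $\mathcal{P}_{\mathcal{A}(x)}$ denote the distribution of $\mathcal{A}(x)$ when $x\sim\mathcal{P}_{\mathcal{X}}$. The total variation distance is $\|\mathcal{P}_{\mathcal{X}}-\mathcal{P}_{\mathcal{A}(x)}\|_{TV}=\sup_{C\subseteq\mathcal{X}}|\mathcal{P}_{\mathcal{X}}(C)-\mathcal{P}_{\mathcal{A}(x)}(C)|$. The attack $\mathcal{A}$ is $\rho$-conservative if $\|\mathcal{P}_{\mathcal{X}}-\mathcal{P}_{\mathcal{A}(x)}\|_{TV}\le\rho$. *)

(* Defs.v *)
From mathcomp Require Import all_boot all_order all_algebra.
From mathcomp Require Import all_classical all_reals all_analysis.
Set Implicit Arguments. Unset Strict Implicit. Unset Printing Implicit Defensive.
Import Order.TTheory GRing.Theory Num.Theory.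
Local Open Scope classical_set_scope.
Local Open Scope ereal_scope.

Definition tv_dist d (T : measurableType d) (R : realType)
  (P Q : set T -> \bar R) : \bar R :=
  ereal_sup [set `|P C - Q C| | C in [set C : set T | measurable C]].

Definition marginal d1 d2 (X : measurableType d1) (Y : measurableType d2)
  (R : realType) (D : set (X * Y)%type -> \bar R) : set X -> \bar R :=
  pushforward D fst.

Definition attack_dist d (X : measurableType d) (R : realType)
  (P : set X -> \bar R) (A : X -> X) : set X -> \bar R :=
  pushforward P A.

Definition conservative d (X : measurableType d) (R : realType)
  (P : set X -> \bar R) (A : X -> X) (rho : R) : Prop :=
  tv_dist P (attack_dist P A) <= rho%:E.

(* Main.v *)
Require Import Defs.
From mathcomp Require Import all_boot all_order all_algebra.
From mathcomp Require Import all_classical all_reals all_analysis.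
From mathcomp Require Import lra.
Import Order.TTheory GRing.Theory Num.Theory.
Local Open Scope classical_set_scope.
Local Open Scope ring_scope.

Theorem lemma1 (R : realType) (d1 d2 : measure_display)
  (X : measurableType d1) (Y : measurableType d2)
  (D : probability (X * Y)%type R)
  (F G : X -> Y) (A : X -> X) (rho eps : R)
  (hrho : 0 < rho < 1) (heps : 0 < eps < 1)
  (mA : measurable_fun setT A)
  (mFy : measurable [set p : X * Y | F p.1 <> p.2])
  (mGy : measurable [set p : X * Y | G p.1 <> p.2])
  (mFG : measurable [set x : X | F x <> G x])
  (hA : conservative (marginal D) A rho)
  (hF : (D [set p | F p.1 <> p.2] <= eps%:E)%E)
  (hG : (D [set p | G p.1 <> p.2] <= eps%:E)%E) :
  (marginal D [set x | F (A x) <> G (A x)] <= (2 * eps + rho)%:E)%E.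
Proof.
set S := [set x : X | F x <> G x].
have mfst : forall B : set X, measurable B -> measurable (fst @^-1` B : set (X * Y)).
  move=> B mB; have := (@measurable_fst _ _ X Y measurableT B mB); by rewrite setTI.
have mAS : measurable (A @^-1` S).
  have := mA measurableT S mFG; by rewrite setTI.
have hS : (`|marginal D S - attack_dist (marginal D) A S| <= rho%:E)%E.
  apply: le_trans hA; apply: ereal_sup_ubound; exists S => //.
have -> : marginal D [set x | F (A x) <> G (A x)] = attack_dist (marginal D) A S by [].
have hPS : (marginal D S <= (2 * eps)%:E)%E.
  rewrite /marginal /pushforward.
  apply: (@le_trans _ _ (D ([set p | F p.1 <> p.2] `|` [set p | G p.1 <> p.2]))).
    apply: le_measure; rewrite ?inE //; first exact: mfst.
      exact: measurableU.
    move=> p /= hp; case: (pselect (F p.1 = p.2)) => h; [right|left] => //.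
    by move=> h'; apply: hp; rewrite h h'.
  apply: le_trans (measureU2 _ mFy mGy) _.
  rewrite (_ : 2 * eps = eps + eps); last lra.
  by rewrite EFinD; apply: leeD.
have f1 : (marginal D S)%E \is a fin_num.
  rewrite /attack_dist /marginal /pushforward ge0_fin_numE; last exact: measure_ge0.
  apply: le_lt_trans (probability_le1 _ (mfst _ mFG)) _; exact: ltry.
have f2 : (attack_dist (marginal D) A S)%E \is a fin_num.
  rewrite /attack_dist /marginal /pushforward ge0_fin_numE; last exact: measure_ge0.
  apply: le_lt_trans (probability_le1 _ (mfst _ mAS)) _; exact: ltry.
move: hS hPS; rewrite -(fineK f1) -(fineK f2) -EFinB /= !lee_fin.
move: (fine _) (fine _) => a b hab ha.
have := ler_norm (a - b); rewrite -normrN opprB; lra.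
Qed.
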